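(* Let $R$ be a ring with identity, ${}_RM$ a left $R$-module, $\varphi\in\mathrm{Hom}_R(M,M)$, and $r\ge1$ an integer such that $\ker(\varphi^r)\oplus\mathrm{im}(\varphi^r)=M$. Let $\varphi_1=\varphi\restriction\ker(\varphi^r)$ and $\varphi_2=\varphi\restriction\mathrm{im}(\varphi^r)$. Then there is an isomorphism of $Z(R)$-algebras $C_\varphi\cong C_{\varphi_1}\times C_{\varphi_2}$, where $C_\varphi\subseteq\mathrm{Hom}_R(M,M)$, $C_{\varphi_1}\subseteq\mathrm{Hom}_R(\ker(\varphi^r),\ker(\varphi^r))$ and $C_{\varphi_2}\subseteq\mathrm{Hom}_R(\mathrm{im}(\varphi^r),\mathrm{im}(\varphi^r))$ are the respective centralizers.
   Context: For an endomorphism $\alpha$ of a module $N$, $C_\alpha=\{\psi\in\mathrm{Hom}_R(N,N)\mid\psi\circ\alpha=\alpha\circ\psi\}$. $Z(R)$ is the centre of $R$. Note $\varphi$ maps $\ker(\varphi^r)$ and $\mathrm{im}(\varphi^r)$ into themselves. *)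

(* Defs.v *)
From HB Require Import structures.
From mathcomp Require Import all_boot all_order all_algebra.
From mathcomp Require Import boolp.
Set Implicit Arguments.
Unset Strict Implicit.
Unset Printing Implicit Defensive.
Import GRing.Theory.
Local Open Scope ring_scope.

Section SubModType.
Variables (R : pzRingType) (M : lmodType R) (S : submodClosed M).
Record submod_of := SubmodOf { submod_val : M; submod_valP : submod_val \in S }.
HB.instance Definition _ := [isSub for submod_val].
HB.instance Definition _ := [Choice of submod_of by <:].
HB.instance Definition _ := [SubChoice_isSubLmodule of submod_of by <:].
End SubModType.

Section KerIm.
Variables (R : pzRingType) (M : lmodType R) (phi : {linear M -> M}) (r : nat).

Definition kerpow : pred M := fun x => iter r phi x == 0.
Definition impow : pred M := fun x => `[< exists y, x = iter r phi y >].

Lemma iter_lin n a u v :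
  iter n phi (a *: u + v) = a *: iter n phi u + iter n phi v.
Proof. by elim: n => [|n IH] //=; rewrite IH linearP. Qed.

Lemma iter_0 n : iter n phi 0 = 0.
Proof. by elim: n => [|n IH] //=; rewrite IH linear0. Qed.

Lemma kerpow_closed : subsemimod_closed kerpow.
Proof.
apply: GRing.submod_closed_semi; split.
  by rewrite unfold_in /kerpow /= iter_0.
move=> a u v; rewrite !unfold_in /kerpow /= iter_lin => /eqP -> /eqP ->.
by rewrite scaler0 addr0.
Qed.


Lemma impow_closed : subsemimod_closed impow.
Proof.
apply: GRing.submod_closed_semi; split.
  by rewrite unfold_in /impow; apply/asboolP; exists 0; rewrite iter_0.
move=> a u v; rewrite !unfold_in /impow => /asboolP [y ->] /asboolP [z ->].
by apply/asboolP; exists (a *: y + z); rewrite iter_lin.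
Qed.


Lemma iter_phi_comm n x : iter n phi (phi x) = phi (iter n phi x).
Proof. by elim: n => [|n IH] //=; rewrite IH. Qed.

Lemma kerpow_stable x : x \in kerpow -> phi x \in kerpow.
Proof.
by rewrite !unfold_in /kerpow /= iter_phi_comm => /eqP ->; rewrite linear0.
Qed.

Lemma impow_stable x : x \in impow -> phi x \in impow.
Proof.
rewrite !unfold_in /impow => /asboolP [y ->].
by apply/asboolP; exists (phi y); rewrite iter_phi_comm.
Qed.

End KerIm.

HB.instance Definition _ (R : pzRingType) (M : lmodType R)
  (phi : {linear M -> M}) (r : nat) :=
  GRing.isSubmodClosed.Build R M (kerpow phi r) (kerpow_closed phi r).
HB.instance Definition _ (R : pzRingType) (M : lmodType R)
  (phi : {linear M -> M}) (r : nat) :=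
  GRing.isSubmodClosed.Build R M (impow phi r) (impow_closed phi r).

Definition KerMod (R : pzRingType) (M : lmodType R) (phi : {linear M -> M})
  (r : nat) : lmodType R :=
  submod_of (GRing.SubmodClosed.clone _ _ (kerpow phi r) _).
Definition ImMod (R : pzRingType) (M : lmodType R) (phi : {linear M -> M})
  (r : nat) : lmodType R :=
  submod_of (GRing.SubmodClosed.clone _ _ (impow phi r) _).

Definition phi_ker (R : pzRingType) (M : lmodType R) (phi : {linear M -> M})
  (r : nat) (x : KerMod phi r) : KerMod phi r :=
  @SubmodOf _ _ (GRing.SubmodClosed.clone _ _ (kerpow phi r) _)
    (phi (submod_val x)) (kerpow_stable (submod_valP x)).
Definition phi_im (R : pzRingType) (M : lmodType R) (phi : {linear M -> M})
  (r : nat) (x : ImMod phi r) : ImMod phi r :=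
  @SubmodOf _ _ (GRing.SubmodClosed.clone _ _ (impow phi r) _)
    (phi (submod_val x)) (impow_stable (submod_valP x)).

Definition direct_sum_eq (R : pzRingType) (M : lmodType R) (N1 N2 : pred M) :=
  (forall x, x \in N1 -> x \in N2 -> x = 0) /\
  (forall x, exists y z, [/\ y \in N1, z \in N2 & x = y + z]).

Definition center (R : pzRingType) : pred R :=
  fun z => `[< forall a : R, z * a = a * z >].

Definition centralizer (R : pzRingType) (N : lmodType R) (alpha : N -> N)
  (psi : N -> N) : Prop := linear psi /\ psi \o alpha = alpha \o psi.

(* Phi is an isomorphism of Z(R)-algebras from the subalgebra A of End_R(N)
   onto the product algebra B1 x B2 (B1 in End_R(N1), B2 in End_R(N2)), where
   the algebra operations are pointwise sum, composition, identity, and the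
   Z(R)-action (z . psi)(x) = z *: psi x. *)
Definition Zalg_iso_prod (R : pzRingType) (N N1 N2 : lmodType R)
  (A : (N -> N) -> Prop) (B1 : (N1 -> N1) -> Prop) (B2 : (N2 -> N2) -> Prop)
  (Phi : (N -> N) -> (N1 -> N1) * (N2 -> N2)) : Prop :=
  (forall psi, A psi -> B1 (Phi psi).1 /\ B2 (Phi psi).2) /\
      (forall psi chi, A psi -> A chi -> Phi psi = Phi chi -> psi = chi) /\
      (forall f g, B1 f -> B2 g -> exists2 psi, A psi & Phi psi = (f, g)) /\
      (forall psi chi, A psi -> A chi ->
         Phi (fun x => psi x + chi x) =
         (fun x => (Phi psi).1 x + (Phi chi).1 x,
          fun x => (Phi psi).2 x + (Phi chi).2 x)) /\
      (forall psi chi, A psi -> A chi ->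
         Phi (psi \o chi) = ((Phi psi).1 \o (Phi chi).1,
                             (Phi psi).2 \o (Phi chi).2)) /\
      Phi id = (id, id) /\
      (forall (z : R) psi, z \in @center R -> A psi ->
         Phi (fun x => z *: psi x) =
         (fun x => z *: (Phi psi).1 x, fun x => z *: (Phi psi).2 x)).

(* Main.v *)
Require Import Defs.
From HB Require Import structures.
From mathcomp Require Import all_boot all_order all_algebra.
From mathcomp Require Import boolp.
Import GRing.Theory.
Local Open Scope ring_scope.

Definition resS {R : pzRingType} {M : lmodType R} {S : submodClosed M}
  (psi : M -> M) (x : submod_of S) : submod_of S := insubd 0 (psi (val x)).

Definition stab {R : pzRingType} {M : lmodType R} (S : {pred M}) (psi : M -> M) :=
  forall x, x \in S -> psi x \in S.

Lemma resS_val (R : pzRingType) (M : lmodType R) (S : submodClosed M)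
  (psi : M -> M) (hs : stab S psi) (x : submod_of S) :
  val (resS psi x) = psi (val x).
Proof. by rewrite /resS val_insubd hs //; apply: valP. Qed.

Lemma linD {R : pzRingType} {N : lmodType R} {psi : N -> N} :
  linear psi -> forall u v, psi (u + v) = psi u + psi v.
Proof. by move=> h u v; have := h 1 u v; rewrite !scale1r. Qed.

Lemma lin0 {R : pzRingType} {N : lmodType R} {psi : N -> N} :
  linear psi -> psi 0 = 0.
Proof. by move=> h; have := h (-1) 0 0; rewrite !scaleN1r !addNr. Qed.

Lemma linZ {R : pzRingType} {N : lmodType R} {psi : N -> N} :
  linear psi -> forall a u, psi (a *: u) = a *: psi u.
Proof. by move=> h a u; have := h a u 0; rewrite !addr0 (lin0 h) addr0. Qed.

Lemma res_central (R : pzRingType) (M : lmodType R) (S : submodClosed M)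
  (phi : M -> M) (alpha : submod_of S -> submod_of S)
  (halpha : forall x, val (alpha x) = phi (val x))
  (psi : M -> M) (hs : stab S psi) :
  centralizer phi psi -> centralizer alpha (resS psi).
Proof.
move=> [hl hc]; split.
  move=> a u v; apply: val_inj.
  rewrite resS_val // !linearP /= hl !resS_val //.
apply: funext => x; apply: val_inj => /=.
rewrite resS_val // !halpha resS_val //.
exact: (congr1 (fun f => f (val x)) hc).
Qed.

Lemma iter_comm (R : pzRingType) (M : lmodType R) (phi psi : M -> M) n x :
  psi \o phi = phi \o psi -> iter n phi (psi x) = psi (iter n phi x).
Proof.
move=> hc; elim: n => [|n IH] //=; rewrite IH.
exact: esym (congr1 (fun f => f (iter n phi x)) hc).
Qed.

Lemma ker_stab (R : pzRingType) (M : lmodType R) (phi : {linear M -> M}) r psi :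
  centralizer phi psi -> stab (kerpow phi r) psi.
Proof.
move=> [hl hc] x; rewrite !unfold_in /kerpow /= iter_comm // => /eqP ->.
by rewrite (lin0 hl).
Qed.

Lemma im_stab (R : pzRingType) (M : lmodType R) (phi : {linear M -> M}) r psi :
  centralizer phi psi -> stab (impow phi r) psi.
Proof.
move=> [hl hc] x; rewrite !unfold_in /impow => /asboolP [y ->].
by apply/asboolP; exists (psi y); rewrite (@iter_comm _ _ _ _ r y hc).
Qed.

Lemma resS_add (R : pzRingType) (M : lmodType R) (S : submodClosed M)
  (psi chi : M -> M) : stab S psi -> stab S chi ->
  resS (S:=S) (fun x => psi x + chi x) = (fun k => resS psi k + resS chi k).
Proof.
move=> h1 h2; apply: funext => k; apply: val_inj.
have hs : stab S (fun x => psi x + chi x) by move=> x xS; rewrite rpredD ?h1 ?h2.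
by rewrite resS_val // raddfD /= !resS_val.
Qed.

Lemma resS_comp (R : pzRingType) (M : lmodType R) (S : submodClosed M)
  (psi chi : M -> M) : stab S psi -> stab S chi ->
  resS (S:=S) (psi \o chi) = resS psi \o resS chi.
Proof.
move=> h1 h2; apply: funext => k; apply: val_inj.
have hs : stab S (psi \o chi) by move=> x xS /=; rewrite h1 ?h2.
by rewrite /= !resS_val.
Qed.

Lemma resS_id (R : pzRingType) (M : lmodType R) (S : submodClosed M) :
  resS (S:=S) id = id.
Proof. by apply: funext => k; apply: val_inj; rewrite resS_val. Qed.

Lemma resS_scale (R : pzRingType) (M : lmodType R) (S : submodClosed M)
  (psi : M -> M) (z : R) : stab S psi ->
  resS (S:=S) (fun x => z *: psi x) = (fun k => z *: resS psi k).
Proof.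
move=> h1; apply: funext => k; apply: val_inj.
have hs : stab S (fun x => z *: psi x) by move=> x xS; rewrite rpredZ ?h1.
by rewrite resS_val // linearZ /= resS_val.
Qed.

Lemma subS (R : pzRingType) (M : lmodType R) (S : submodClosed M) u v :
  u \in S -> v \in S -> u - v \in S.
Proof. by move=> hu hv; rewrite -scaleN1r rpredD // rpredZ. Qed.

Lemma ds_uniq (R : pzRingType) (M : lmodType R) (S1 S2 : submodClosed M) :
  (forall x, x \in S1 -> x \in S2 -> x = 0) ->
  forall y1 z1 y2 z2, y1 \in S1 -> z1 \in S2 -> y2 \in S1 -> z2 \in S2 ->
  y1 + z1 = y2 + z2 -> y1 = y2 /\ z1 = z2.
Proof.
move=> h y1 z1 y2 z2 h1 h2 h3 h4 e.
have e1 : y1 - y2 = z2 - z1.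
  by apply/eqP; rewrite subr_eq addrAC (addrC z2) -e addrK.
have z0 : y1 - y2 = 0.
  by apply: h; [apply: subS | rewrite e1; apply: subS].
split; first by apply/eqP; rewrite -subr_eq0 z0.
by apply/eqP; rewrite eq_sym -subr_eq0 -e1 z0.
Qed.

Lemma insubd_lin (R : pzRingType) (M : lmodType R) (S : submodClosed M) a y1 y2 :
  y1 \in S -> y2 \in S ->
  insubd (0 : submod_of S) (a *: y1 + y2) = a *: insubd 0 y1 + insubd 0 y2.
Proof.
move=> h1 h2; apply: val_inj.
by rewrite linearP /= !val_insubd h1 h2 rpredD ?rpredZ.
Qed.

Lemma insubd0 (R : pzRingType) (M : lmodType R) (S : submodClosed M) :
  insubd (0 : submod_of S) 0 = 0.
Proof. by apply: val_inj; rewrite val_insubd rpred0. Qed.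

Lemma sval_lin (R : pzRingType) (M : lmodType R) (S : submodClosed M) a
  (x y : submod_of S) : submod_val (a *: x + y) = a *: submod_val x + submod_val y.
Proof. exact: (linearP (val : submod_of S -> M)). Qed.

Lemma sval0 (R : pzRingType) (M : lmodType R) (S : submodClosed M) :
  submod_val (0 : submod_of S) = 0.
Proof. exact: (raddf0 (val : submod_of S -> M)). Qed.

Theorem lemma5p1 (R : pzRingType) (M : lmodType R) (phi : {linear M -> M})
    (r : nat) :
  (1 <= r)%N ->
  direct_sum_eq (kerpow phi r) (impow phi r) ->
  exists Phi : (M -> M) ->
      (KerMod phi r -> KerMod phi r) * (ImMod phi r -> ImMod phi r),
    Zalg_iso_prod (@centralizer R M phi)
      (@centralizer R (KerMod phi r) (@phi_ker R M phi r))
      (@centralizer R (ImMod phi r) (@phi_im R M phi r)) Phi.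
Proof.
move=> _ [hdisj hdec].
have uniq := @ds_uniq R M (GRing.SubmodClosed.clone _ _ (kerpow phi r) _)
  (GRing.SubmodClosed.clone _ _ (impow phi r) _) hdisj.
have [d hd] : exists d : M -> M * M, forall x,
    [/\ (d x).1 \in kerpow phi r, (d x).2 \in impow phi r & x = (d x).1 + (d x).2].
  have H x : exists p : M * M,
      [/\ p.1 \in kerpow phi r, p.2 \in impow phi r & x = p.1 + p.2].
    by have [y [z [? ? ?]]] := hdec x; exists (y, z).
  exists (fun x => proj1_sig (constructive_indefinite_description (H x))) => x.
  by case: constructive_indefinite_description.
have deq w y z : y \in kerpow phi r -> z \in impow phi r -> w = y + z ->
    d w = (y, z).
  move=> hy hz ew; have [h1 h2 h3] := hd w.
  have e : (d w).1 + (d w).2 = y + z by rewrite -h3.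
  by have [<- <-] := uniq _ _ _ _ h1 h2 hy hz e; case: (d w).
exists (fun psi => (resS psi, resS psi)).
split.
  move=> psi hp; split; apply: res_central => //;
    [exact: ker_stab | exact: im_stab].
split.
  move=> psi chi hp hc e; apply: funext => x.
  have [h1 h2 ->] := hd x.
  rewrite (linD hp.1) (linD hc.1).
  have eK : psi (d x).1 = chi (d x).1.
    have := congr1 (fun f => val (f (insubd (0 : KerMod phi r) (d x).1))) (congr1 fst e).
    by rewrite /= !resS_val ?insubdK //; (apply: ker_stab).
  have eI : psi (d x).2 = chi (d x).2.
    have := congr1 (fun f => val (f (insubd (0 : ImMod phi r) (d x).2))) (congr1 snd e).
    by rewrite /= !resS_val ?insubdK //; (apply: im_stab).
  by rewrite eK eI.
split.
  move=> f g [fl fc] [gl gc].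
  have dlin a u v : d (a *: u + v) =
      (a *: (d u).1 + (d v).1, a *: (d u).2 + (d v).2).
    have [u1 u2 eu] := hd u; have [v1 v2 ev] := hd v.
    apply: deq; first by rewrite rpredD ?rpredZ.
      by rewrite rpredD ?rpredZ.
    by rewrite {1}eu {1}ev scalerDr addrACA.
  have dphi x : d (phi x) = (phi (d x).1, phi (d x).2).
    have [x1 x2 ex] := hd x.
    apply: deq; first exact: kerpow_stable.
      exact: impow_stable.
    by rewrite {1}ex linearD.
  pose psi := fun x => val (f (insubd (0 : KerMod phi r) (d x).1))
                     + val (g (insubd (0 : ImMod phi r) (d x).2)).
  have hpsi : centralizer phi psi.
    split.
      move=> a u v; rewrite /psi dlin /=.
      have [u1 u2 _] := hd u; have [v1 v2 _] := hd v.
      rewrite !insubd_lin // fl gl !sval_lin.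
      by rewrite scalerDr addrACA.
    apply: funext => x; rewrite /psi /= dphi /= linearD /=.
    have hk : insubd (0 : KerMod phi r) (phi (d x).1) =
        phi_ker (insubd (0 : KerMod phi r) (d x).1).
      have [x1 _ _] := hd x.
      apply: val_inj; rewrite /= !val_insubd x1 kerpow_stable //.
    have hi : insubd (0 : ImMod phi r) (phi (d x).2) =
        phi_im (insubd (0 : ImMod phi r) (d x).2).
      have [_ x2 _] := hd x.
      apply: val_inj; rewrite /= !val_insubd x2 impow_stable //.
    rewrite hk hi.
    set k1 := insubd (0 : KerMod phi r) (d x).1.
    set k2 := insubd (0 : ImMod phi r) (d x).2.
    have e1 : f (phi_ker k1) = phi_ker (f k1) := congr1 (fun h => h k1) fc.
    have e2 : g (phi_im k2) = phi_im (g k2) := congr1 (fun h => h k2) gc.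
    by rewrite e1 e2.
  exists psi => //.
  congr pair; apply: funext => k; apply: val_inj.
    rewrite resS_val; last exact: ker_stab.
    rewrite /psi (deq (val k) (val k) 0) ?rpred0 ?addr0 //; last exact: valP.
    by rewrite /= valKd insubd0 (lin0 gl) sval0 addr0.
  rewrite resS_val; last exact: im_stab.
  rewrite /psi (deq (val k) 0 (val k)) ?rpred0 ?add0r //; last exact: valP.
  by rewrite /= valKd insubd0 (lin0 fl) sval0 add0r.
split.
  move=> psi chi hp hc /=.
  by rewrite !resS_add //; (apply: ker_stab || apply: im_stab).
split.
  move=> psi chi hp hc /=.
  by congr pair; apply: resS_comp; (apply: ker_stab || apply: im_stab).
split.
  by congr pair; apply: resS_id.
move=> z psi _ hp /=.
by congr pair; apply: resS_scale; (apply: ker_stab || apply: im_stab).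
Qed.
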